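(* Let $(V,E)$ be a finite graph with $E\ne\emptyset$ and $p\in(0,1)$. Let $(\eta_t,\sigma_t)_{t\ge0}$ be a continuous-time Markov jump process on $\mathcal C$ with the following rates: (a) if $\sigma'=\sigma$ and there is $e\in E$ with $\eta'=\eta^e$ and $\gamma_\eta(e)=1$, then $c((\eta,\sigma),(\eta',\sigma'))=\big((1-p)\mathbf 1_{\eta(e)=1}+p\mathbf 1_{\eta(e)=0}\big)\mathbf 1_{(\eta,\sigma)\in\mathcal C}$; (b) if $\sigma'=\sigma$ and there is $e\in E$ with $\eta'=\eta^e$, $\gamma_\eta(e)=0$ and $\delta_\sigma(e)=1$, then $c((\eta,\sigma),(\eta',\sigma'))=\frac12\big((1-p)\mathbf 1_{\eta(e)=1}+p\mathbf 1_{\eta(e)=0}\big)\mathbf 1_{(\eta,\sigma)\in\mathcal C}$; (c) if there are $x\in V$ and $e\in E_x$ with $\eta'=\eta^e$, $\gamma_\eta(e)=0$, $\eta(e)=\delta_\sigma(e)$, and $\sigma'(y)=-\sigma(y)$ for the vertices $y$ connected to $x$ by an open path of $\eta$ not using $e$ (including $y=x$), $\sigma'(y)=\sigma(y)$ otherwise, then $c((\eta,\sigma),(\eta',\sigma'))=\frac14\big((1-p)\mathbf 1_{\eta(e)=1}\mathbf 1_{(\eta,\sigma)\in\mathcal C}+p\mathbf 1_{\eta(e)=0}\mathbf 1_{(\eta',\sigma')\in\mathcal C}\big)$; (d) all other off-diagonal rates are $0$. Then $(\eta_t,\sigma_t)_{t\ge0}$ is reversible with respect to $IP$; its edge marginal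 $(\eta_t)_{t\ge0}$ is a Markov jump process evolving according to the FK dynamics, i.e. with rates $\tilde c(\eta,\eta^e)=1-p$ if $\eta(e)=1$, $p$ if $\eta(e)=0$ and $\gamma_\eta(e)=1$, $p/2$ if $\eta(e)=0$ and $\gamma_\eta(e)=0$ (and $0$ for changes of two or more edges); and its spin marginal $(\sigma_t)_{t\ge0}$ is not a Markov jump process.
   Context: Edge configurations $\eta\in\{0,1\}^E$ (1 = open), spin configurations $\sigma\in\{-1,1\}^V$. For $e=\langle x,y\rangle$, $\delta_\sigma(e)=\mathbf 1_{\sigma(x)=\sigma(y)}$. $\mathcal C=\{(\eta,\sigma):\eta(e)\le\delta_\sigma(e)\ \forall e\in E\}$. $IP(\eta,\sigma)=\frac1Z\prod_{e\in E}\big(p\mathbf 1_{\eta(e)=1}\delta_\sigma(e)+(1-p)\mathbf 1_{\eta(e)=0}\big)$ with $Z$ the normalizing constant. $E_x$ is the set of edges with endvertex $x$; $\eta^e$ is $\eta$ with the value at $e$ changed. For $e=\langle x,y\rangle$, $\gamma_\eta(e)=1$ if $x,y$ are connected by a path of open edges of $\eta$ not using $e$, and $0$ otherwise. Reversibility w.r.t. $IP$ means $IP(a)c(a,b)=IP(b)c(b,a)$ for all states. A marginal process is a Markov jump process if it is a time-homogeneous Markov process for every initial distribution, with transition rates not depending on the initial distribution. *)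

(* Defs.v *)
From HB Require Import structures.
From mathcomp Require Import all_boot all_order all_algebra.
From mathcomp Require Import all_classical all_reals all_analysis.
Set Implicit Arguments. Unset Strict Implicit. Unset Printing Implicit Defensive.
Import Order.TTheory GRing.Theory Num.Theory.
Import numFieldNormedType.Exports.
Local Open Scope ring_scope.

Section MarkovJump.
Variable R : realType.

Definition gen (T : finType) (c : T -> T -> R) (a b : T) : R :=
  if a == b then - (\sum_(b' | b' != a) c a b') else c a b.

Fixpoint qpow (T : finType) (Q : T -> T -> R) (k : nat) : T -> T -> R :=
  match k with
  | 0 => fun a b => (a == b)%:R
  | k'.+1 => fun a b => \sum_(c : T) qpow Q k' a c * Q c b
  end.

(* transition function P_t = exp(t Q), entrywise as a power series *)
Definition trans (T : finType) (Q : T -> T -> R) (t : R) (a b : T) : R :=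
  limn (series (fun k : nat => t ^+ k / (k`!)%:R * qpow Q k a b)).

(* probability of visiting the successive states, with time increments,
   for a Markov chain with transition function P started at a *)
Fixpoint pathprob (T : finType) (P : R -> T -> T -> R) (a : T)
  (steps : seq (R * T)) : R :=
  match steps with
  | [::] => 1
  | (s, b) :: rest => P s a b * pathprob P b rest
  end.

Fixpoint mpathprob (T U : finType) (P : R -> T -> T -> R) (f : T -> U) (a : T)
  (steps : seq (R * U)) : R :=
  match steps with
  | [::] => 1
  | (s, y) :: rest => \sum_(b | f b == y) P s a b * mpathprob P f b rest
  end.

Definition is_distribution (T : finType) (mu : T -> R) : Prop :=
  (forall a, 0 <= mu a) /\ \sum_a mu a = 1.

(* The image process (f X_t)_t of the Markov jump process X on T with
   off-diagonal rates c is, for every initial distribution mu of X_0, a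
   time-homogeneous Markov process with off-diagonal rates ct (the same
   for all mu): all finite-dimensional distributions agree. *)
Definition image_is_MJP_with_rates (T U : finType) (c : T -> T -> R) (f : T -> U)
  (ct : U -> U -> R) : Prop :=
  forall mu : T -> R, is_distribution mu ->
  forall (y0 : U) (steps : seq (R * U)), all (fun st => 0 <= st.1) steps ->
    \sum_(a | f a == y0) mu a * mpathprob (trans (gen c)) f a steps
    = (\sum_(a | f a == y0) mu a) * pathprob (trans (gen ct)) y0 steps.

Definition offdiag_rates (U : finType) (ct : U -> U -> R) : Prop :=
  forall y y', y != y' -> 0 <= ct y y'.

Definition image_is_MJP (T U : finType) (c : T -> T -> R) (f : T -> U) : Prop :=
  exists ct : U -> U -> R, offdiag_rates ct /\ image_is_MJP_with_rates c f ct.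

Definition reversible (T : finType) (pi : T -> R) (c : T -> T -> R) : Prop :=
  forall a b, pi a * c a b = pi b * c b a.

End MarkovJump.

(* Spins are booleans (true = +1, false = -1), edges: true = open.         *)
Section ES.
Variables (R : realType) (V E : finType) (src dst : E -> V).

Definition econf := {ffun E -> bool}.
Definition sconf := {ffun V -> bool}.
Definition state := (econf * sconf)%type.

Definition incident (x : V) (e : E) : bool := (src e == x) || (dst e == x).

Definition delta (s : sconf) (e : E) : bool := s (src e) == s (dst e).

Definition inC (a : state) : bool := [forall e, a.1 e ==> delta a.2 e].

Definition flip (eta : econf) (e : E) : econf :=
  [ffun f => if f == e then ~~ eta e else eta f].

Definition open_adj (eta : econf) (e : E) : rel V :=
  fun u v => [exists f, [&& f != e, eta f &
                ((src f == u) && (dst f == v)) || ((src f == v) && (dst f == u))]].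

Definition conn_wo (eta : econf) (e : E) (x y : V) : bool :=
  connect (open_adj eta e) x y.

Definition gamma (eta : econf) (e : E) : bool := conn_wo eta e (src e) (dst e).

Definition cluster_flip (eta : econf) (e : E) (x : V) (s : sconf) : sconf :=
  [ffun y => if conn_wo eta e x y then ~~ s y else s y].

Definition b2r (b : bool) : R := b%:R.

Definition caseA (a a' : state) (e : E) : bool :=
  [&& a'.2 == a.2, a'.1 == flip a.1 e & gamma a.1 e].
Definition caseB (a a' : state) (e : E) : bool :=
  [&& a'.2 == a.2, a'.1 == flip a.1 e, ~~ gamma a.1 e & delta a.2 e].
Definition caseC (a a' : state) (xe : V * E) : bool :=
  [&& incident xe.1 xe.2, a'.1 == flip a.1 xe.2, ~~ gamma a.1 xe.2,
      a.1 xe.2 == delta a.2 xe.2 &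
      a'.2 == cluster_flip a.1 xe.2 xe.1 a.2].

Definition ES_rate (p : R) (a a' : state) : R :=
  match [pick e | caseA a a' e] with
  | Some e => ((1 - p) * b2r (a.1 e) + p * b2r (~~ a.1 e)) * b2r (inC a)
  | None =>
    match [pick e | caseB a a' e] with
    | Some e => 2^-1 * ((1 - p) * b2r (a.1 e) + p * b2r (~~ a.1 e)) * b2r (inC a)
    | None =>
      match [pick xe | caseC a a' xe] with
      | Some xe => 4^-1 * ((1 - p) * b2r (a.1 xe.2) * b2r (inC a)
                          + p * b2r (~~ a.1 xe.2) * b2r (inC a'))
      | None => 0
      end
    end
  end.

Definition Cstate := {a : state | inC a}.

Definition ES_rate_C (p : R) (a b : Cstate) : R := ES_rate p (val a) (val b).

Definition IPweight (p : R) (a : state) : R :=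
  \prod_(e : E) (p * b2r (a.1 e) * b2r (delta a.2 e) + (1 - p) * b2r (~~ a.1 e)).
Definition IPZ (p : R) : R := \sum_(a : state) IPweight p a.
Definition IP (p : R) (a : state) : R := IPweight p a / IPZ p.

Definition FK_rate (p : R) (eta eta' : econf) : R :=
  match [pick e | eta' == flip eta e] with
  | Some e => if eta e then 1 - p
              else if gamma eta e then p else p / 2
  | None => 0
  end.

Definition edge_marg (a : Cstate) : econf := (val a).1.
Definition spin_marg (a : Cstate) : sconf := (val a).2.

End ES.

(* Main.v *)
Require Import Defs.
From HB Require Import structures.
From mathcomp Require Import all_boot all_order all_algebra.
From mathcomp Require Import all_classical all_reals all_analysis.
From mathcomp Require Import ring lra.
Import Order.TTheory GRing.Theory Num.Theory.
Import numFieldNormedType.Exports.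
Local Open Scope ring_scope.
Set Implicit Arguments. Unset Strict Implicit. Unset Printing Implicit Defensive.

Section Gen.
Variable R : realType.

Lemma qpow_bound (T : finType) (Q : T -> T -> R) k a b :
  `|qpow Q k a b| <= (\sum_c \sum_d `|Q c d|) ^+ k.
Proof.
elim: k b => [|k IH] b /=.
  by rewrite expr0; case: (a == b); rewrite ?normr1 ?normr0.
rewrite exprS mulrC.
apply: (le_trans (ler_norm_sum _ _ _)).
apply: (@le_trans _ _ (\sum_c (\sum_c0 \sum_d `|Q c0 d|) ^+ k * `|Q c b|)).
  apply: ler_sum => c _; rewrite normrM ler_wpM2r //.
have H1 : \sum_c `|Q c b| <= \sum_c \sum_d `|Q c d|.
  apply: ler_sum => c _.
  by rewrite (bigD1 b) //= lerDl sumr_ge0.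
have H2 : 0 <= (\sum_c \sum_d `|Q c d|) ^+ k.
  by apply: exprn_ge0; apply: sumr_ge0 => c _; apply: sumr_ge0.
by rewrite -mulr_sumr ler_wpM2l.
Qed.

Lemma trans_cvg (T : finType) (Q : T -> T -> R) t a b :
  cvgn (series (fun k : nat => t ^+ k / (k`!)%:R * qpow Q k a b)).
Proof.
set M := \sum_c \sum_d `|Q c d|.
apply: normed_cvg.
apply: (@series_le_cvg _ _ (exp_coeff (`|t| * M))).
- by move=> n; rewrite normr_ge0.
- by move=> n; apply: exp_coeff_ge0; rewrite mulr_ge0 // sumr_ge0 // => c _; rewrite sumr_ge0.
- move=> n; rewrite /exp_coeff /= normrM normrM normfV normrX exprMn.
  rewrite [`|(n`!)%:R|]ger0_norm // mulrAC ler_wpM2r ?invr_ge0 //.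
  by rewrite ler_wpM2l ?exprn_ge0 // qpow_bound.
- exact: is_cvg_series_exp_coeff.
Qed.

Lemma lim_sum_seq (I : eqType) (s : seq I) (P : pred I) (F : I -> nat -> R) :
  (forall i, cvgn (F i)) ->
  cvgn (fun n => \sum_(i <- s | P i) F i n) /\
  limn (fun n => \sum_(i <- s | P i) F i n) = \sum_(i <- s | P i) limn (F i).
Proof.
move=> cF; elim: s => [|i s [IHc IHl]].
  by rewrite big_nil; under eq_fun do rewrite big_nil; split;
    [apply: is_cvg_cst | apply: lim_cst].
rewrite big_cons; under eq_fun do rewrite big_cons.
case: (P i); last by split.
split; first exact: is_cvgD.
by rewrite limD // IHl.
Qed.

Lemma trans_sum (T : finType) (Q : T -> T -> R) t a (Pb : pred T) :
  cvgn (series (fun k : nat => t ^+ k / (k`!)%:R * \sum_(b | Pb b) qpow Q k a b)) /\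
  \sum_(b | Pb b) trans Q t a b =
  limn (series (fun k : nat => t ^+ k / (k`!)%:R * \sum_(b | Pb b) qpow Q k a b)).
Proof.
have E : series (fun k : nat => t ^+ k / (k`!)%:R * \sum_(b | Pb b) qpow Q k a b)
  = (fun n => \sum_(b <- index_enum T | Pb b)
       series (fun k : nat => t ^+ k / (k`!)%:R * qpow Q k a b) n).
  apply: funext => n; rewrite /series /= exchange_big /=.
  by apply: eq_bigr => k _; rewrite mulr_sumr.
rewrite E; have [C L] := lim_sum_seq (index_enum T) Pb
  (fun b => @trans_cvg T Q t a b).
by split => //; rewrite L.
Qed.

End Gen.

Section Lump.
Variables (R : realType) (T U : finType) (c : T -> T -> R) (f : T -> U)
  (ct : U -> U -> R).
Hypothesis H1 : forall a y, y != f a -> \sum_(b | f b == y) c a b = ct (f a) y.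
Hypothesis H2 : forall a b, b != a -> f b == f a -> c a b = 0.

Lemma lump_gen a y : \sum_(b | f b == y) gen c a b = gen ct (f a) y.
Proof.
rewrite /gen; case: (eqVneq y (f a)) => [->|ya]; last first.
  rewrite -H1 //; apply: eq_bigr => b fb.
  by case: eqP => // ab; move: ya; rewrite -(eqP fb) ab eqxx.
rewrite (bigD1 a) //= eqxx [X in _ + X = _]big1 ?addr0; last first.
  by move=> b /andP[fb ba]; rewrite eq_sym (negPf ba) (H2 ba fb).
congr (- _).
rewrite (bigID (fun b => f b == f a)) /= big1 ?add0r; last first.
  by move=> b /andP[ba fb]; apply: H2 => //; rewrite eq_sym.
rewrite (partition_big f (fun y => y != f a)) /=; last by move=> b /andP[].
apply: eq_bigr => z za; rewrite -H1 1?eq_sym //.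
  apply: eq_bigl => b; have [fbz|] := eqVneq (f b) z; rewrite ?andbT ?andbF //.
  rewrite fbz za andbT; apply/eqP => ba; move: za; rewrite -fbz ba eqxx //.
by rewrite eq_sym.
Qed.

Lemma lump_qpow k a y :
  \sum_(b | f b == y) qpow (gen c) k a b = qpow (gen ct) k (f a) y.
Proof.
elim: k a y => [|k IH] a y /=.
  have [<-|ya] := eqVneq (f a) y.
    rewrite (bigD1 a) //= eqxx big1 ?addr0 // => b /andP[_ ba].
    by rewrite eq_sym (negPf ba).
  rewrite big1 // => b /eqP fb; case: eqP => // ab.
  by move: ya; rewrite ab fb eqxx.
rewrite exchange_big /=.
under eq_bigr do rewrite -mulr_sumr lump_gen.
rewrite (partition_big f predT) //=.
apply: eq_bigr => z _; rewrite -IH mulr_suml; apply: eq_bigr => b /eqP -> //.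
Qed.

Lemma lump_trans t a y :
  \sum_(b | f b == y) trans (gen c) t a b = trans (gen ct) t (f a) y.
Proof.
have [_ ->] := trans_sum (gen c) t a (fun b => f b == y).
rewrite /trans; congr (limn (series _)); apply: funext => k.
by rewrite lump_qpow.
Qed.

Lemma lump_path a steps :
  mpathprob (trans (gen c)) f a steps = pathprob (trans (gen ct)) (f a) steps.
Proof.
elim: steps a => [|[s y] rest IH] a //=.
under eq_bigr => b /eqP fb do rewrite IH fb.
by rewrite -mulr_suml lump_trans.
Qed.

Lemma lump_MJP : image_is_MJP_with_rates c f ct.
Proof.
move=> mu _ y0 steps _.
rewrite mulr_suml; apply: eq_bigr => a /eqP fa.
by rewrite lump_path fa.
Qed.

End Lump.

Section Small.
Variable R : realType.

Lemma series_scale (c : R) (g : R ^nat) : cvgn (series g) ->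
  cvgn (series (fun k => c * g k)) /\
  limn (series (fun k => c * g k)) = c * limn (series g).
Proof.
move=> cg.
have -> : (fun k => c * g k) = c *: g by apply: funext => k.
split; first exact: is_cvg_seriesZ.
by rewrite lim_seriesZ.
Qed.

Lemma series_ind1 (x : R) :
  cvgn (series (fun k : nat => (k == 1)%:R * x)) /\
  limn (series (fun k : nat => (k == 1)%:R * x)) = x.
Proof.
have H : \forall n \near eventually, series (fun k : nat => (k == 1)%:R * x) n = x.
  exists 2%N => // n /= n2.
  rewrite /series /= big_mkord (bigD1 (Ordinal (n2 : (1 < n)%N))) //= mul1r.
  rewrite big1 ?addr0 // => i ne; rewrite mulr_natl.
  case: eqP => //= i1; move: ne; suff -> : i = Ordinal (n2 : (1 < n)%N) by rewrite eqxx.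
  by apply: val_inj.
split; first by apply/cvg_ex; exists x; exact: cvg_near_cst.
exact: lim_near_cst.
Qed.

Lemma small_t (D : nat -> R) (K M : R) : 0 <= M -> D 0%N = 0 -> 0 < D 1%N ->
  (forall k, `|D k| <= K * M ^+ k) ->
  exists2 t, 0 <= t & 0 < limn (series (fun k : nat => t ^+ k / (k`!)%:R * D k)).
Proof.
move=> M0 D0 D1 HD.
have K0 : 0 <= K by have := HD 0%N; rewrite expr0 mulr1; apply: le_trans.
set C := K * limn (series (exp_coeff M)).
have cE := is_cvg_series_exp_coeff M.
have bound : forall t, 0 <= t <= 1 ->
  `|limn (series (fun k : nat => t ^+ k / (k`!)%:R * D k)) - t * D 1%N| <= t ^+ 2 * C.
  move=> t /andP[t0 t1].
  set u := (fun k : nat => t ^+ k / (k`!)%:R * D k).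
  set w := (fun k : nat => (k == 1)%:R * (t * D 1%N)).
  set v := (fun k : nat => u k - w k).
  have hv : forall k, `|v k| <= (t ^+ 2 * K) * exp_coeff M k.
    case=> [|[|k]].
    - by rewrite /v /u /w /= D0 mulr0 mul0r subr0 normr0 mulr_ge0 ?exp_coeff_ge0 // mulr_ge0 // exprn_ge0.
    - rewrite /v /u /w /= expr1 mul1r divr1 subrr normr0.
      by rewrite mulr_ge0 ?exp_coeff_ge0 // mulr_ge0 // exprn_ge0.
    - rewrite /v /u /w /= mul0r subr0 /exp_coeff /=.
      rewrite normrM normrM normfV [`|(k.+2)`!%:R|]ger0_norm // ger0_norm ?exprn_ge0 //.
      set f := (k.+2)`!%:R.
      have f0 : 0 <= f^-1 by rewrite invr_ge0.
      have KM : 0 <= K * M ^+ k.+2 by rewrite mulr_ge0 // exprn_ge0.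
      apply: (@le_trans _ _ (t ^+ k.+2 / f * (K * M ^+ k.+2))).
        by rewrite ler_wpM2l // mulr_ge0 // exprn_ge0.
      have -> : t ^+ 2 * K * (M ^+ k.+2 / f) = t ^+ 2 * f^-1 * (K * M ^+ k.+2) by ring.
      rewrite ler_wpM2r // ler_wpM2r //.
      have -> : t ^+ k.+2 = t ^+ 2 * t ^+ k by rewrite -exprD.
      rewrite ler_piMr ?exprn_ge0 //.
      by rewrite exprn_ile1.
  have [cB lB] := series_scale (t ^+ 2 * K) cE.
  have cnv : cvgn [normed series v].
    apply: (@series_le_cvg _ _ (fun k => (t ^+ 2 * K) * exp_coeff M k)) => //.
    - by move=> n /=; rewrite normr_ge0.
    - by move=> n; rewrite mulr_ge0 ?exp_coeff_ge0 // mulr_ge0 // exprn_ge0.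
  have cv := normed_cvg cnv.
  have [cw lw] := series_ind1 (t * D 1%N).
  have uvw : u = v + w by apply: funext => k; rewrite /v /= subrK.
  rewrite uvw lim_seriesD // lw addrK.
  apply: (le_trans (lim_series_norm cnv)).
  rewrite /C mulrA -lB; apply: lim_series_le => //.
have C0 : (0:R) <= C.
  have := bound 1; rewrite ler01 lexx => /(_ isT); rewrite expr1n.
  by move=> h; have := le_trans (normr_ge0 _) h; rewrite mul1r.
set D1' := D 1%N in D1 bound *.
pose t := D1' / (2 * (C + 1) + D1').
have den : 0 < 2 * (C + 1) + D1' by lra.
have t0 : 0 < t by rewrite /t divr_gt0.
have te : t * (2 * (C + 1) + D1') = D1' by rewrite /t mulfVK // gt_eqF.
have t1 : t <= 1 by rewrite /t ler_pdivrMr // mul1r; lra.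
exists t; first exact: ltW.
have := bound t; rewrite (ltW t0) t1 => /(_ isT); rewrite ler_norml => /andP[h _].
set x := limn _ in h *.
nra.
Qed.

End Small.

Section ESgraph.
Variables (V E : finType) (src dst : E -> V).

Lemma flip_e (eta : econf E) e : flip eta e e = ~~ eta e.
Proof. by rewrite /flip ffunE eqxx. Qed.

Lemma flip_ne (eta : econf E) e f : f != e -> flip eta e f = eta f.
Proof. by move=> fe; rewrite /flip ffunE (negPf fe). Qed.

Lemma flipK (eta : econf E) e : flip (flip eta e) e = eta.
Proof.
apply/ffunP => f; have [->|fe] := eqVneq f e; first by rewrite !flip_e negbK.
by rewrite !flip_ne.
Qed.

Lemma flip_inj (eta : econf E) e e' : flip eta e = flip eta e' -> e = e'.
Proof.
move=> h; apply/eqP; apply/negPn/negP => ne.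
have := congr1 (fun g : econf E => g e) h; rewrite /= flip_e flip_ne //.
by case: (eta e).
Qed.

Lemma flip_neq (eta : econf E) e : flip eta e != eta.
Proof.
apply/negP => /eqP h; have := congr1 (fun g : econf E => g e) h.
by rewrite /= flip_e; case: (eta e).
Qed.

Lemma open_adj_sym (eta : econf E) e : symmetric (open_adj src dst eta e).
Proof.
move=> u v; rewrite /open_adj; apply/existsP/existsP => [][f hf]; exists f;
by move: hf; rewrite orbC.
Qed.

Lemma open_adj_flip (eta : econf E) e :
  open_adj src dst (flip eta e) e =2 open_adj src dst eta e.
Proof.
move=> u v; rewrite /open_adj; apply/existsP/existsP => [][f /and3P[fe h1 h2]].
  by exists f; rewrite fe h2 andbT /=; move: h1; rewrite flip_ne.
by exists f; rewrite fe h2 andbT /= flip_ne.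
Qed.

Lemma conn_flip (eta : econf E) e x y :
  conn_wo src dst (flip eta e) e x y = conn_wo src dst eta e x y.
Proof. by rewrite /conn_wo (eq_connect (open_adj_flip eta e)). Qed.

Lemma gamma_flip (eta : econf E) e : gamma src dst (flip eta e) e = gamma src dst eta e.
Proof. exact: conn_flip. Qed.

Lemma conn_sym (eta : econf E) e x y :
  conn_wo src dst eta e x y = conn_wo src dst eta e y x.
Proof. by rewrite /conn_wo (sym_connect_sym (open_adj_sym eta e)). Qed.

Lemma conn_refl (eta : econf E) e x : conn_wo src dst eta e x x.
Proof. exact: connect0. Qed.

Lemma conn_spin (eta : econf E) (s : sconf V) e u v :
  inC src dst (eta, s) -> conn_wo src dst eta e u v -> s u = s v.
Proof.
move=> /forallP hC /connectP[q pth ->] {v}.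
elim: q u pth => //= w q IH u /andP[adj pth]; rewrite -(IH w pth).
case/existsP: adj => f /and3P[_ ef hf]; have := hC f; rewrite /= ef /delta /=.
by move=> /eqP; case/orP: hf => /andP[/eqP -> /eqP ->].
Qed.

Lemma gamma_delta (eta : econf E) (s : sconf V) e :
  inC src dst (eta, s) -> gamma src dst eta e -> delta src dst s e.
Proof. by move=> hC /(conn_spin hC) h; rewrite /delta h. Qed.

Lemma cf_at (eta : econf E) e x (s : sconf V) y :
  cluster_flip src dst eta e x s y = if conn_wo src dst eta e x y then ~~ s y else s y.
Proof. by rewrite /cluster_flip ffunE. Qed.

Lemma cf_neq (eta : econf E) e x (s : sconf V) : cluster_flip src dst eta e x s != s.
Proof.
apply/negP => /eqP h; have := congr1 (fun g : sconf V => g x) h.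
by rewrite /= cf_at conn_refl; case: (s x).
Qed.

Lemma cfK (eta : econf E) e x (s : sconf V) :
  cluster_flip src dst eta e x (cluster_flip src dst eta e x s) = s.
Proof.
apply/ffunP => y; rewrite !cf_at; case: conn_wo => //; exact: negbK.
Qed.

Lemma cf_flip (eta : econf E) e x (s : sconf V) :
  cluster_flip src dst (flip eta e) e x s = cluster_flip src dst eta e x s.
Proof. by apply/ffunP => y; rewrite !cf_at conn_flip. Qed.

Lemma incidentP x e : incident src dst x e -> x = src e \/ x = dst e.
Proof. by case/orP => /eqP ->; [left|right]. Qed.

Lemma cf_src_dst (eta : econf E) e (s : sconf V) : ~~ gamma src dst eta e ->
  cluster_flip src dst eta e (src e) s != cluster_flip src dst eta e (dst e) s.
Proof.
move=> ng; apply/negP => /eqP h; have := congr1 (fun g : sconf V => g (src e)) h.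
rewrite /= !cf_at conn_refl conn_sym.
by move: ng; rewrite /gamma => /negPf ->; case: (s (src e)).
Qed.

Lemma cf_x_uniq (eta : econf E) e x x' (s : sconf V) : ~~ gamma src dst eta e ->
  incident src dst x e -> incident src dst x' e ->
  cluster_flip src dst eta e x s = cluster_flip src dst eta e x' s -> x = x'.
Proof.
move=> ng /incidentP[]-> /incidentP[]-> // h.
  by have := cf_src_dst s ng; rewrite h eqxx.
by have := cf_src_dst s ng; rewrite h eqxx.
Qed.

Lemma delta_cf_open (eta : econf E) e x (s : sconf V) f :
  eta f -> f != e -> delta src dst (cluster_flip src dst eta e x s) f = delta src dst s f.
Proof.
move=> ef fe; rewrite /delta !cf_at.
have adj : open_adj src dst eta e (src f) (dst f).
  by apply/existsP; exists f; rewrite fe ef !eqxx.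
have -> : conn_wo src dst eta e x (dst f) = conn_wo src dst eta e x (src f).
  apply/idP/idP => h.
    apply: connect_trans h _; rewrite /conn_wo (sym_connect_sym (open_adj_sym eta e)).
    exact: connect1.
  by apply: connect_trans h (connect1 adj).
by case: conn_wo => //; case: (s (src f)); case: (s (dst f)).
Qed.

Lemma delta_cf_e (eta : econf E) e x (s : sconf V) :
  incident src dst x e -> ~~ gamma src dst eta e ->
  delta src dst (cluster_flip src dst eta e x s) e = ~~ delta src dst s e.
Proof.
move=> /incidentP[]-> ng; rewrite /delta !cf_at conn_refl.
  by move: ng; rewrite /gamma => /negPf ->; case: (s (src e)); case: (s (dst e)).
by rewrite conn_sym; move: ng; rewrite /gamma => /negPf ->;
  case: (s (src e)); case: (s (dst e)).
Qed.

Lemma inC_flip (eta : econf E) (s : sconf V) e :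
  inC src dst (eta, s) -> delta src dst s e -> inC src dst (flip eta e, s).
Proof.
move=> /forallP hC de; apply/forallP => f /=.
have [->|fe] := eqVneq f e; first by rewrite de implybT.
by rewrite flip_ne //; exact: hC.
Qed.

Lemma inC_cf (eta : econf E) (s : sconf V) e x :
  inC src dst (eta, s) -> incident src dst x e -> ~~ gamma src dst eta e ->
  eta e == delta src dst s e ->
  inC src dst (flip eta e, cluster_flip src dst eta e x s).
Proof.
move=> /forallP hC ix ng /eqP ed; apply/forallP => f /=.
have [->|fe] := eqVneq f e; first by rewrite flip_e delta_cf_e // ed implybb.
rewrite flip_ne //; case ef: (eta f) => //=.
by rewrite delta_cf_open //; have := hC f; rewrite /= ef.
Qed.

Lemma caseA_sym (a b : state V E) e : caseA src dst a b e -> caseA src dst b a e.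
Proof.
case/and3P => /eqP h2 /eqP h1 g; apply/and3P; split.
- by rewrite h2.
- by rewrite h1 flipK.
- by rewrite h1 gamma_flip.
Qed.

Lemma caseB_sym (a b : state V E) e : caseB src dst a b e -> caseB src dst b a e.
Proof.
case/and4P => /eqP h2 /eqP h1 g d; apply/and4P; split.
- by rewrite h2.
- by rewrite h1 flipK.
- by rewrite h1 gamma_flip.
- by rewrite h2.
Qed.

Lemma caseC_sym (a b : state V E) x e :
  caseC src dst a b (x, e) -> caseC src dst b a (x, e).
Proof.
case/and5P => /= ix /eqP h1 ng /eqP ed /eqP h2; apply/and5P; split => //=.
- by rewrite h1 flipK.
- by rewrite h1 gamma_flip.
- by rewrite h1 h2 flip_e delta_cf_e // ed.
- by rewrite h1 h2 cf_flip cfK.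
Qed.

End ESgraph.

Section ESrates.
Variables (R : realType) (V E : finType) (src dst : E -> V) (p : R).

Lemma flip_uniq (a b : state V E) e e' :
  b.1 == flip a.1 e -> b.1 == flip a.1 e' -> e = e'.
Proof. by move=> /eqP -> /eqP /flip_inj. Qed.

Lemma noA_of_C (a b : state V E) x e e' :
  caseC src dst a b (x, e) -> ~~ caseA src dst a b e'.
Proof.
case/and5P => /= _ _ _ _ /eqP h2; apply/negP => /and3P[/eqP h _ _].
by have := cf_neq src dst a.1 e x a.2; rewrite -h2 h eqxx.
Qed.

Lemma noB_of_C (a b : state V E) x e e' :
  caseC src dst a b (x, e) -> ~~ caseB src dst a b e'.
Proof.
case/and5P => /= _ _ _ _ /eqP h2; apply/negP => /and4P[/eqP h _ _ _].
by have := cf_neq src dst a.1 e x a.2; rewrite -h2 h eqxx.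
Qed.

Lemma rateA (a b : state V E) e : caseA src dst a b e ->
  ES_rate src dst p a b = ((1 - p) * b2r R (a.1 e) + p * b2r R (~~ a.1 e)) * b2r R (inC src dst a).
Proof.
move=> hA; rewrite /ES_rate; case: pickP => [e' hA'|/(_ e)]; last by rewrite hA.
by case/and3P: hA => _ h _; case/and3P: hA' => _ h' _; rewrite (flip_uniq h' h).
Qed.

Lemma rateB (a b : state V E) e : caseB src dst a b e ->
  ES_rate src dst p a b = 2^-1 * ((1 - p) * b2r R (a.1 e) + p * b2r R (~~ a.1 e)) * b2r R (inC src dst a).
Proof.
move=> hB; rewrite /ES_rate; case: pickP => [e' hA'|_].
  case/and4P: hB => _ h ng _; case/and3P: hA' => _ h' g.
  by move: ng; rewrite -(flip_uniq h' h) g.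
case: pickP => [e' hB'|/(_ e)]; last by rewrite hB.
by case/and4P: hB => _ h _ _; case/and4P: hB' => _ h' _ _; rewrite (flip_uniq h' h).
Qed.

Lemma rateC (a b : state V E) x e : caseC src dst a b (x, e) ->
  ES_rate src dst p a b = 4^-1 * ((1 - p) * b2r R (a.1 e) * b2r R (inC src dst a)
                          + p * b2r R (~~ a.1 e) * b2r R (inC src dst b)).
Proof.
move=> hC; rewrite /ES_rate; case: pickP => [e' hA'|_].
  by have := noA_of_C e' hC; rewrite hA'.
case: pickP => [e' hB'|_].
  by have := noB_of_C e' hC; rewrite hB'.
case: pickP => [[x' e'] hC'|/(_ (x, e))]; last by rewrite hC.
case/and5P: hC => /= ix h ng _ /eqP h2; case/and5P: hC' => /= ix' h' _ _ /eqP h2'.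
have ee := flip_uniq h' h; subst e'.
have xx : x' = x by apply: (cf_x_uniq (s := a.2) ng) => //; rewrite -h2 -h2'.
by subst x'.
Qed.

Lemma rate0 (a b : state V E) :
  (forall e, ~~ caseA src dst a b e) -> (forall e, ~~ caseB src dst a b e) ->
  (forall xe, ~~ caseC src dst a b xe) -> ES_rate src dst p a b = 0.
Proof.
move=> nA nB nC; rewrite /ES_rate.
case: pickP => [e h|_]; first by have := nA e; rewrite h.
case: pickP => [e h|_]; first by have := nB e; rewrite h.
case: pickP => [e h|_]; first by have := nC e; rewrite h.
by [].
Qed.

Hypotheses (p0 : 0 < p) (p1 : p < 1).

Lemma b2r_ge0 b : 0 <= b2r R b.
Proof. by rewrite /b2r; case: b. Qed.

Lemma rate_ge0 (a b : state V E) : 0 <= ES_rate src dst p a b.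
Proof.
have h1 : 0 <= 1 - p by rewrite subr_ge0 ltW.
have h2 : 0 <= p by rewrite ltW.
have hb := b2r_ge0.
rewrite /ES_rate; case: pickP => [e _|_].
  by rewrite mulr_ge0 // addr_ge0 // mulr_ge0.
case: pickP => [e _|_].
  by rewrite mulr_ge0 // mulr_ge0 ?invr_ge0 ?ler0n // addr_ge0 // mulr_ge0.
case: pickP => [e _|_] //.
by rewrite mulr_ge0 ?invr_ge0 ?ler0n // addr_ge0 // !mulr_ge0.
Qed.

Definition Fw (x d : bool) : R := p * b2r R x * b2r R d + (1 - p) * b2r R (~~ x).

Lemma weight_split (a : state V E) e : IPweight src dst p a =
  Fw (a.1 e) (delta src dst a.2 e) * \prod_(f | f != e) Fw (a.1 f) (delta src dst a.2 f).
Proof. by rewrite /IPweight (bigD1 e). Qed.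

Lemma rev_states (a b : state V E) : inC src dst a -> inC src dst b ->
  IPweight src dst p a * ES_rate src dst p a b = IPweight src dst p b * ES_rate src dst p b a.
Proof.
move=> ia ib.
case: (pickP (caseA src dst a b)) => [e hA|nA].
  have hA' := caseA_sym hA; rewrite (rateA hA) (rateA hA') ia ib.
  case: a b ia ib hA hA' => [eta s] [eta' s'] ia ib hA _.
  case/and3P: hA => /= /eqP h2 /eqP h1 g; subst s' eta'.
  have de := gamma_delta ia g.
  rewrite !(weight_split _ e) /= flip_e de.
  have -> : \prod_(f | f != e) Fw (flip eta e f) (delta src dst s f) =
            \prod_(f | f != e) Fw (eta f) (delta src dst s f).
    by apply: eq_bigr => f fe; rewrite flip_ne.
  set W := \prod_(f | _) _.
  by rewrite /Fw /b2r; case: (eta e) => /=; ring.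
case: (pickP (caseB src dst a b)) => [e hB|nB].
  have hB' := caseB_sym hB; rewrite (rateB hB) (rateB hB') ia ib.
  clear nA; case: a b ia ib hB hB' => [eta s] [eta' s'] ia ib hB _.
  case/and4P: hB => /= /eqP h2 /eqP h1 g de; subst s' eta'.
  rewrite !(weight_split _ e) /= flip_e de.
  have -> : \prod_(f | f != e) Fw (flip eta e f) (delta src dst s f) =
            \prod_(f | f != e) Fw (eta f) (delta src dst s f).
    by apply: eq_bigr => f fe; rewrite flip_ne.
  set W := \prod_(f | _) _.
  by rewrite /Fw /b2r; case: (eta e) => /=; ring.
case: (pickP (caseC src dst a b)) => [[x e] hC|nC].
  have hC' := caseC_sym hC; rewrite (rateC hC) (rateC hC') ia ib.
  clear nA nB; case: a b ia ib hC hC' => [eta s] [eta' s'] ia ib hC _.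
  case/and5P: hC => /= ix /eqP h1 ng /eqP ed /eqP h2; subst s' eta'.
  rewrite !(weight_split _ e) /= flip_e delta_cf_e // -ed.
  have -> : \prod_(f | f != e) Fw (flip eta e f)
               (delta src dst (cluster_flip src dst eta e x s) f) =
            \prod_(f | f != e) Fw (eta f) (delta src dst s f).
    apply: eq_bigr => f fe; rewrite flip_ne //; case ef: (eta f).
      by rewrite delta_cf_open.
    by rewrite /Fw /b2r /= !mulr0 !mul0r.
  set W := \prod_(f | _) _.
  by rewrite /Fw /b2r; case: (eta e) => /=; ring.
rewrite !rate0 ?mulr0 //.
- by move=> e; apply/negP => /caseA_sym; rewrite nA.
- by move=> e; apply/negP => /caseB_sym; rewrite nB.
- by move=> [x e]; apply/negP => /caseC_sym; rewrite nC.
- by move=> e; rewrite nA.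
- by move=> e; rewrite nB.
- by move=> xe; rewrite nC.
Qed.

End ESrates.

Section EdgeLump.
Variables (R : realType) (V E : finType) (src dst : E -> V) (p : R).
Hypotheses (p0 : 0 < p) (p1 : p < 1).

Lemma sum_target (y : econf E) (s1 : sconf V) (r : R) :
  \sum_(b : Cstate src dst | (val b).1 == y) ((val b).2 == s1)%:R * r =
  (if inC src dst (y, s1) then r else 0).
Proof.
case: ifPn => [hin|hnin].
  rewrite (bigD1 (exist _ (y, s1) hin)) //= eqxx mul1r big1 ?addr0 //.
  move=> b /andP[/eqP yb nb]; case: eqP => [sb|]; last by rewrite mul0r.
  move: nb; suff -> : b = exist _ (y, s1) hin by rewrite eqxx.
  by apply: val_inj => /=; rewrite -yb -sb; case: (val b).
rewrite big1 // => b /eqP yb; case: eqP => [sb|]; last by rewrite mul0r.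
move: hnin; have -> : (y, s1) = val b by rewrite -yb -sb; case: (val b).
by rewrite (valP b).
Qed.

Let cf := cluster_flip src dst.

Lemma rate_point (eta : econf E) (s : sconf V) e (b : state V E) :
  inC src dst (eta, s) -> inC src dst b -> b.1 = flip eta e ->
  ES_rate src dst p (eta, s) b =
    (b.2 == s)%:R *
      (if gamma src dst eta e then (1 - p) * b2r R (eta e) + p * b2r R (~~ eta e)
       else if delta src dst s e then 2^-1 * ((1 - p) * b2r R (eta e) + p * b2r R (~~ eta e))
       else 0)
  + ((b.2 == cf eta e (src e) s)%:R + (b.2 == cf eta e (dst e) s)%:R) *
      (if ~~ gamma src dst eta e && (eta e == delta src dst s e)
       then 4^-1 * ((1 - p) * b2r R (eta e) + p * b2r R (~~ eta e)) else 0).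
Proof.
case: b => eta' s' ia ib /= h1; subst eta'.
have hb1 : (flip eta e, s').1 == flip (eta, s).1 e by [].
have ib1 : b2r R true = 1 by [].
have [hs|hs] := eqVneq s' s.
  subst s'; rewrite mul1r.
  have -> : (s == cf eta e (src e) s) = false.
    by apply/negbTE; rewrite eq_sym; exact: cf_neq.
  have -> : (s == cf eta e (dst e) s) = false.
    by apply/negbTE; rewrite eq_sym; exact: cf_neq.
  rewrite add0r mul0r addr0.
  have nC : forall xe, ~~ caseC src dst (eta, s) (flip eta e, s) xe.
    move=> [x e']; apply/negP => /and5P[/= _ _ _ _ /eqP h].
    by have := cf_neq src dst eta e' x s; rewrite -h eqxx.
  case g: (gamma src dst eta e).
    have hA : caseA src dst (eta, s) (flip eta e, s) e by rewrite /caseA /= !eqxx g.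
    by rewrite (rateA p hA) ia /= mulr1.
  case d: (delta src dst s e).
    have hB : caseB src dst (eta, s) (flip eta e, s) e by rewrite /caseB /= !eqxx g d.
    by rewrite (rateB p hB) ia /= mulr1.
  rewrite rate0 // => e'.
    by apply/negP => /and3P[_ /= /eqP /flip_inj <- g']; move: g'; rewrite g.
  by apply/negP => /and4P[_ /= /eqP /flip_inj <- _ d']; move: d'; rewrite d.
rewrite mul0r add0r.
have nA : forall e', ~~ caseA src dst (eta, s) (flip eta e, s') e'.
  by move=> e'; apply/negP => /and3P[/= /eqP h _ _]; move: hs; rewrite h eqxx.
have nB : forall e', ~~ caseB src dst (eta, s) (flip eta e, s') e'.
  by move=> e'; apply/negP => /and4P[/= /eqP h _ _ _]; move: hs; rewrite h eqxx.
have Cx : forall x e', caseC src dst (eta, s) (flip eta e, s') (x, e') ->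
    [/\ e' = e, incident src dst x e, ~~ gamma src dst eta e,
        eta e == delta src dst s e & s' = cf eta e x s].
  move=> x e' /and5P[/= ix h ng ed /eqP h2].
  by have ee := flip_inj (eqP h); subst e'.
case cond: (~~ gamma src dst eta e && (eta e == delta src dst s e)); last first.
  rewrite mulr0 rate0 // => [[x e']]; apply/negP => /Cx[_ _ ng ed _].
  by move: cond; rewrite ng ed.
case/andP: cond => ng ed.
have [hx|hx] := eqVneq s' (cf eta e (src e) s).
  have -> : (s' == cf eta e (dst e) s) = false.
    by rewrite hx; apply/negbTE; exact: cf_src_dst.
  have hC : caseC src dst (eta, s) (flip eta e, s') (src e, e).
    by apply/and5P; split => //=; rewrite ?/incident ?eqxx ?hx.
  by rewrite (rateC p hC) ia ib /= ib1 addr0 mul1r !mulr1.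
have [hy|hy] := eqVneq s' (cf eta e (dst e) s).
  have hC : caseC src dst (eta, s) (flip eta e, s') (dst e, e).
    by apply/and5P; split => //=; rewrite ?/incident ?eqxx ?orbT ?hy.
  by rewrite (rateC p hC) ia ib /= ib1 add0r mul1r !mulr1.
rewrite add0r mul0r rate0 // => [[x e']]; apply/negP => /Cx[_ ix _ _ h].
by case/incidentP: ix => hx'; subst x; [move: hx | move: hy]; rewrite h eqxx.
Qed.


Lemma edge_sum (a : Cstate src dst) (y : econf E) : y != edge_marg a ->
  \sum_(b : Cstate src dst | edge_marg b == y) ES_rate_C p a b =
  FK_rate src dst p (edge_marg a) y.
Proof.
case: a => [[eta s] ia]; rewrite /edge_marg /ES_rate_C /= => ny.
case: (pickP (fun e => y == flip eta e)) => [e /eqP ye | none]; last first.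
  rewrite /FK_rate; case: pickP => [e h|_]; first by have := none e; rewrite h.
  rewrite big1 // => b /eqP yb; apply: rate0 => [e|e|[x e]]; apply/negP.
  - by case/and3P => _ /= h _; have := none e; rewrite -yb h.
  - by case/and4P => _ /= h _ _; have := none e; rewrite -yb h.
  - by case/and5P => _ /= h _ _ _; have := none e; rewrite -yb h.
subst y.
have -> : FK_rate src dst p eta (flip eta e) =
    if eta e then 1 - p else if gamma src dst eta e then p else p / 2.
  rewrite /FK_rate; case: pickP => [e' /eqP /flip_inj <- // | /(_ e)].
  by rewrite eqxx.
under eq_bigr => b /eqP hb do rewrite (rate_point (b := val b) ia (valP b) hb) [X in _ + X]mulrDl.
rewrite big_split /= big_split /= !sum_target.
set r := (1 - p) * b2r R (eta e) + p * b2r R (~~ eta e).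
have ib1 : b2r R true = 1 by [].
have ib0 : b2r R false = 0 by [].
case g: (gamma src dst eta e) => /=.
  rewrite (inC_flip ia (gamma_delta ia g)).
  rewrite !if_same !addr0 /r.
  by case: (eta e) => /=; rewrite ?ib1 ?ib0; lra.
case d: (delta src dst s e) => /=.
  rewrite (inC_flip ia d).
  case ee: (eta e) => /=.
    have i1 : incident src dst (src e) e by rewrite /incident eqxx.
    have i2 : incident src dst (dst e) e by rewrite /incident eqxx orbT.
    have ng : ~~ gamma src dst eta e by rewrite g.
    have ed : eta e == delta src dst s e by rewrite ee d.
    rewrite (inC_cf ia i1 ng ed) (inC_cf ia i2 ng ed) ?ee ?d /=.
    by rewrite /r ?ee /= ib1 ib0; lra.
  by rewrite !if_same /r ?ee /= ib1 ib0; lra.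
have ee : eta e = false.
  by move/forallP: ia => /(_ e) /=; rewrite d implybF => /negPf.
have i1 : incident src dst (src e) e by rewrite /incident eqxx.
have i2 : incident src dst (dst e) e by rewrite /incident eqxx orbT.
have ng : ~~ gamma src dst eta e by rewrite g.
have ed : eta e == delta src dst s e by rewrite ee d.
rewrite (inC_cf ia i1 ng ed) (inC_cf ia i2 ng ed) ?ee ?d /=.
by rewrite !if_same /r ?ee /= ib1 ib0; lra.
Qed.

Lemma edge_zero (a b : Cstate src dst) : b != a -> edge_marg b == edge_marg a ->
  ES_rate_C p a b = 0.
Proof.
move=> _ /eqP h; rewrite /edge_marg in h; rewrite /ES_rate_C; apply: rate0 => [e|e|[x e]]; apply/negP.
- by case/and3P => _ /= hh _; move: hh; rewrite h eq_sym (negPf (flip_neq _ _)).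
- by case/and4P => _ /= hh _ _; move: hh; rewrite h eq_sym (negPf (flip_neq _ _)).
- by case/and5P => _ /= hh _ _ _; move: hh; rewrite h eq_sym (negPf (flip_neq _ _)).
Qed.

Lemma part2 : image_is_MJP_with_rates (@ES_rate_C R V E src dst p) (@edge_marg V E src dst)
       (FK_rate src dst p).
Proof.
apply: lump_MJP.
- by move=> a y; exact: edge_sum.
- by move=> a b; exact: edge_zero.
Qed.

End EdgeLump.

Section Spin.
Variables (R : realType) (V E : finType) (src dst : E -> V).
Hypothesis no_loop : forall e, src e != dst e.
Variables (p : R) (e0 : E).
Hypotheses (p0 : 0 < p) (p1 : p < 1).

Lemma sum_delta (T : finType) (P : pred T) (ai : T) (G : T -> R) :
  P ai -> \sum_(a | P a) (a == ai)%:R * G a = G ai.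
Proof.
move=> Pa; rewrite (bigD1 ai) //= eqxx mul1r big1 ?addr0 //.
by move=> a /andP[_ /negPf ->]; rewrite mul0r.
Qed.

Lemma qpow1 (T : finType) (Q : T -> T -> R) a b : qpow Q 1 a b = Q a b.
Proof.
rewrite /= (bigD1 a) //= eqxx mul1r big1 ?addr0 //.
by move=> c /negPf; rewrite eq_sym => ->; rewrite mul0r.
Qed.

Lemma connect_empty (T : finType) (r : rel T) u v :
  (forall u v, ~~ r u v) -> connect r u v -> u = v.
Proof.
move=> h /connectP[[|w q] /= pth ->] //.
by move: pth; rewrite (negPf (h _ _)).
Qed.

Definition eta0 : econf E := [ffun => false].
Definition sig0 : sconf V := [ffun => true].
Definition eta1 : econf E := flip eta0 e0.

Lemma delta0 f : delta src dst sig0 f.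
Proof. by rewrite /delta !ffunE. Qed.

Lemma inC0 : inC src dst (eta0, sig0).
Proof. by apply/forallP => f; rewrite /= ffunE. Qed.

Lemma inC1 : inC src dst (eta1, sig0).
Proof. by apply/forallP => f; rewrite /= delta0 implybT. Qed.

Lemma ng1 : ~~ gamma src dst eta1 e0.
Proof.
apply/negP => /(connect_empty _) h.
have := no_loop e0; rewrite h ?eqxx // => u v.
apply/negP => /existsP[f /and3P[fe ef _]].
by move: ef; rewrite /eta1 flip_ne // ffunE.
Qed.

Definition ystar := cluster_flip src dst eta1 e0 (src e0) sig0.

Lemma inCstar : inC src dst (flip eta1 e0, ystar).
Proof.
apply: inC_cf; first exact: inC1.
- by rewrite /incident eqxx.
- exact: ng1.
- by rewrite /eta1 flip_e ffunE delta0.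
Qed.

Let a1 : Cstate src dst := exist _ (eta0, sig0) inC0.
Let a2 : Cstate src dst := exist _ (eta1, sig0) inC1.
Let bs : Cstate src dst := exist _ (flip eta1 e0, ystar) inCstar.
Let Q := gen (@ES_rate_C R V E src dst p).

Lemma ystar_neq : ystar != sig0.
Proof. exact: cf_neq. Qed.

Lemma neq_ai (b : Cstate src dst) (ai : Cstate src dst) :
  spin_marg ai = sig0 -> spin_marg b == ystar -> (ai == b) = false.
Proof.
move=> hai /eqP hb; apply/negP => /eqP ab; subst b.
by move: ystar_neq; rewrite -hb hai eqxx.
Qed.

Definition Dk (k : nat) : R :=
  \sum_(b | spin_marg b == ystar) (qpow Q k a2 b - qpow Q k a1 b).

Lemma Dk0 : Dk 0 = 0.
Proof.
rewrite /Dk big1 // => b hb /=.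
by rewrite (neq_ai (ai := a2)) // (neq_ai (ai := a1)) // subrr.
Qed.

Lemma Dk1 : 0 < Dk 1.
Proof.
rewrite /Dk.
under eq_bigr => b hb do rewrite !qpow1 /Q /gen (neq_ai (ai := a2)) // (neq_ai (ai := a1)) //.
have z1 : forall b : Cstate src dst, spin_marg b == ystar -> ES_rate_C p a1 b = 0.
  move=> b /eqP hb; rewrite /ES_rate_C /=; apply: rate0 => [e|e|[x e]]; apply/negP.
  - by case/and3P => /= /eqP h _ _; move: ystar_neq; rewrite -hb /spin_marg h eqxx.
  - by case/and4P => /= /eqP h _ _ _; move: ystar_neq; rewrite -hb /spin_marg h eqxx.
  - by case/and5P => _ _ _ /=; rewrite ffunE delta0.
under eq_bigr => b hb do rewrite (z1 b hb) subr0.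
have hbs : spin_marg bs == ystar by [].
rewrite (bigD1 bs) //=.
have pos : 0 < ES_rate_C p a2 bs.
  have hC : caseC src dst (val a2) (val bs) (src e0, e0).
    apply/and5P; split => //=.
    - by rewrite /incident eqxx.
    - exact: ng1.
    - by rewrite /eta1 flip_e ffunE delta0.
  rewrite /ES_rate_C (rateC p hC) /= inC1 inCstar /eta1 flip_e ffunE /=.
  have ib1 : b2r R true = 1 by []. have ib0 : b2r R false = 0 by []. rewrite ib1 ib0 !mulr1 mulr0 addr0 mulr_gt0 // ?invr_gt0 ?subr_gt0 //.
apply: (lt_le_trans pos); rewrite lerDl sumr_ge0 // => b _.
exact: rate_ge0.
Qed.

Lemma Dk_bound k : `|Dk k| <= (\sum_(b : Cstate src dst) (2 : R)) *
   (\sum_c \sum_d `|Q c d|) ^+ k.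
Proof.
set M := \sum_c \sum_d `|Q c d|.
rewrite /Dk mulr_suml; apply: (le_trans (ler_norm_sum _ _ _)).
apply: (@le_trans _ _ (\sum_(b | spin_marg b == ystar) 2 * M ^+ k)).
  apply: ler_sum => b _; apply: (le_trans (ler_normB _ _)).
  have -> : 2 * M ^+ k = M ^+ k + M ^+ k by ring.
  by apply: lerD; apply: qpow_bound.
rewrite [X in _ <= X](bigID (fun b => spin_marg b == ystar)) /= lerDl.
apply: sumr_ge0 => b _; apply: mulr_ge0 => //; apply: exprn_ge0.
by apply: sumr_ge0 => c _; apply: sumr_ge0.
Qed.

Lemma part3 : ~ image_is_MJP (@ES_rate_C R V E src dst p) (@spin_marg V E src dst).
Proof.
move=> [ct [_ H]].
have key : forall ai : Cstate src dst, spin_marg ai = sig0 -> forall t, 0 <= t ->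
    \sum_(b | spin_marg b == ystar) trans Q t ai b =
    trans (gen ct) t sig0 ystar.
  move=> ai hai t t0.
  have distr : is_distribution (fun a : Cstate src dst => (a == ai)%:R : R).
    split; first by move=> a; case: (a == ai).
    by rewrite (bigD1 ai) //= eqxx big1 ?addr0 // => a /negPf ->.
  have Hs : all (fun st : R * sconf V => 0 <= st.1) [:: (t, ystar)] by rewrite /= t0.
  have := H _ distr sig0 _ Hs.
  rewrite sum_delta; last by rewrite hai.
  rewrite (bigD1 ai) /=; last by rewrite hai.
  rewrite eqxx [X in (_ + X) * _]big1 ?addr0; last by move=> a /andP[_ /negPf ->].
  rewrite mul1r mulr1; under eq_bigr do rewrite mulr1.
  by [].
have [t t0 tpos] := @small_t R Dk _ _ (sumr_ge0 _ (fun c _ => sumr_ge0 _ (fun d _ => normr_ge0 (Q c d))))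
  Dk0 Dk1 Dk_bound.
have e2 := key a2 erefl t t0.
have e1 := key a1 erefl t t0.
have [c2 l2] := trans_sum Q t a2 (fun b => spin_marg b == ystar).
have [c1 l1] := trans_sum Q t a1 (fun b => spin_marg b == ystar).
move: tpos.
have -> : (fun k : nat => t ^+ k / (k`!)%:R * Dk k) =
   (fun k : nat => t ^+ k / (k`!)%:R * \sum_(b | spin_marg b == ystar) qpow Q k a2 b) -
   (fun k : nat => t ^+ k / (k`!)%:R * \sum_(b | spin_marg b == ystar) qpow Q k a1 b).
  by apply: funext => k /=; rewrite /Dk sumrB mulrBr.
by rewrite lim_seriesB // -l2 -l1 e2 e1 subrr ltxx.
Qed.

End Spin.

Unset Implicit Arguments.

Theorem theorem5 (R : realType) (V E : finType) (src dst : E -> V)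
  (no_loop : forall e, src e != dst e)
  (simple : forall e f, [set src e; dst e] = [set src f; dst f] -> e = f)
  (E_nonempty : (0 < #|E|)%N)
  (p : R) (p_gt0 : 0 < p) (p_lt1 : p < 1) :
  reversible (fun a : Cstate src dst => IP src dst p (val a)) (@ES_rate_C R V E src dst p)
  /\ image_is_MJP_with_rates (@ES_rate_C R V E src dst p) (@edge_marg V E src dst)
       (FK_rate src dst p)
  /\ ~ image_is_MJP (@ES_rate_C R V E src dst p) (@spin_marg V E src dst).
Proof.
split; [|split].
- move=> a b; rewrite /IP /ES_rate_C mulrAC [RHS]mulrAC.
  by rewrite (rev_states p (valP a) (valP b)).
- exact: part2.
- have [e0 _] := card_gt0P E_nonempty.
  exact: (part3 no_loop e0 p_gt0 p_lt1).
Qed.
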